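(* There is an algorithm which, given an order-3 symmetric tensor $T\in(\mathbb{C}^n)^{\otimes 3}$ and a matrix $V\in M_{n,r}(\mathbb{C})$ with $r\le n$, outputs $s_1,\dots,s_r$ with $s_i=\mathrm{Tr}(S_i)$ for all $i\in[r]$, where $S_1,\dots,S_r$ are the slices of $S=(V\otimes V\otimes V).T\in(\mathbb{C}^r)^{\otimes 3}$, using $O(n^3)$ arithmetic operations.
   Context: The $k$-th slice of a tensor $T=(T_{ijk})$ is the matrix $T_k=(T_{ijk})_{i,j}$. For $A\in\mathbb{C}^{n\times r}$, $(A\otimes A\otimes A).T\in(\mathbb{C}^r)^{\otimes3}$ is defined by $\big((A\otimes A\otimes A).T\big)_{i_1i_2i_3}=\sum_{j_1,j_2,j_3=1}^n A_{j_1i_1}A_{j_2i_2}A_{j_3i_3}T_{j_1j_2j_3}$. Arithmetic operations are exact operations over $\mathbb{C}$. *)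

(* Defs.v *)
From HB Require Import structures.
From mathcomp Require Import all_boot all_order all_algebra.
From mathcomp Require Import complex.
From mathcomp Require Import Rstruct.
Set Implicit Arguments. Unset Strict Implicit. Unset Printing Implicit Defensive.
Import Order.TTheory GRing.Theory Num.Theory.
Local Open Scope ring_scope.

Definition C : fieldType := (Rdefinitions.R)[i].

(** ---- Model of computation: straight-line arithmetic programs ----
    A program acts on a growing list of registers, initially holding the
    inputs.  Each instruction appends one new register, computed by one
    exact arithmetic operation over the field on earlier registers (or a
    constant).  Reading inputs / outputs is free. *)
Inductive instr (F : Type) : Type :=
  | IConst of F
  | IAdd of nat & nat
  | ISub of nat & nat
  | IMul of nat & nat
  | IDiv of nat & nat.

Record slp (F : Type) := SLP { slp_instrs : seq (instr F); slp_outs : seq nat }.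

Section SLPEval.
Variable F : fieldType.

Definition exec_instr (env : seq F) (ins : instr F) : F :=
  match ins with
  | IConst c => c
  | IAdd a b => nth 0 env a + nth 0 env b
  | ISub a b => nth 0 env a - nth 0 env b
  | IMul a b => nth 0 env a * nth 0 env b
  | IDiv a b => nth 0 env a / nth 0 env b
  end.

Definition run_instrs (inp : seq F) (p : seq (instr F)) : seq F :=
  foldl (fun env ins => rcons env (exec_instr env ins)) inp p.

Definition slp_eval (P : slp F) (inp : seq F) : seq F :=
  let env := run_instrs inp (slp_instrs P) in
  [seq nth 0 env o | o <- slp_outs P].

Definition slp_cost (P : slp F) : nat := size (slp_instrs P).
End SLPEval.

Definition tensor3 (F : Type) (n : nat) := 'I_n -> 'I_n -> 'I_n -> F.

Definition symmetric_tensor (F : Type) (n : nat) (T : tensor3 F n) : Prop :=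
  forall i j k, T i j k = T j i k /\ T i j k = T i k j.

Definition tensor_act (F : fieldType) (n r : nat) (A : 'M[F]_(n, r))
  (T : tensor3 F n) : tensor3 F r :=
  fun i1 i2 i3 => \sum_(j1 < n) \sum_(j2 < n) \sum_(j3 < n)
    A j1 i1 * A j2 i2 * A j3 i3 * T j1 j2 j3.

Definition slice (F : Type) (r : nat) (S : tensor3 F r) (k : 'I_r) : 'M[F]_r :=
  \matrix_(i, j) S i j k.

(** Input encoding: entries of T in lexicographic order of (i,j,k),
    followed by entries of V in lexicographic order of (a,b). *)
Definition encode_input (F : Type) (n r : nat) (T : tensor3 F n)
  (V : 'M[F]_(n, r)) : seq F :=
  [seq T t.1.1 t.1.2 t.2 | t <- enum {: 'I_n * 'I_n * 'I_n}]
  ++ [seq V ab.1 ab.2 | ab <- enum {: 'I_n * 'I_r}].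

(* Main.v *)
Require Import Defs.
From HB Require Import structures.
From mathcomp Require Import all_boot all_order all_algebra.
From mathcomp Require Import zify ring.
Import Order.TTheory GRing.Theory Num.Theory.
Set Implicit Arguments. Unset Strict Implicit.

Section Gen.
Variable F : fieldType.

Lemma run_cons (env : seq F) i p :
  run_instrs env (i :: p) = run_instrs (rcons env (exec_instr env i)) p.
Proof. by []. Qed.

Lemma run_cat (env : seq F) p q :
  run_instrs env (p ++ q) = run_instrs (run_instrs env p) q.
Proof. by rewrite /run_instrs foldl_cat. Qed.

Lemma run_size (env : seq F) p : size (run_instrs env p) = size env + size p.
Proof.
elim: p env => [|i p IH] env; first by rewrite addn0.
by rewrite run_cons IH size_rcons addSnnS.
Qed.

Lemma run_prefix (env : seq F) p j : j < size env ->
  nth 0%R (run_instrs env p) j = nth 0%R env j.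
Proof.
elim: p env => [|i p IH] env // Hj.
rewrite run_cons IH ?size_rcons; last by lia.
by rewrite nth_rcons Hj.
Qed.

Fixpoint dotr (N : nat) (ps : seq (nat * nat)) : seq (instr F) :=
  match ps with
  | [::] => [::]
  | p :: ps' => IMul F p.1 p.2 :: IAdd F N N.+1 :: dotr N.+2 ps'
  end.

Definition dot N ps := IConst (0%R : F) :: dotr N ps.

Lemma size_dotr N ps : size (dotr N ps) = 2 * size ps.
Proof. elim: ps N => [|p ps IH] N //=; rewrite IH; lia. Qed.

Lemma dotr_spec (env : seq F) N ps : size env = N.+1 ->
  (forall p, p \in ps -> p.1 < N /\ p.2 < N) ->
  nth 0%R (run_instrs env (dotr N ps)) (N + 2 * size ps) =
  (nth 0%R env N + \sum_(p <- ps) nth 0%R env p.1 * nth 0%R env p.2)%R.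
Proof.
elim: ps env N => [|p ps IH] env N Hs Hp.
  by rewrite /= big_nil addn0 GRing.addr0.
have [H1 H2] := Hp p (mem_head _ _).
have -> : N + 2 * size (p :: ps) = N.+2 + 2 * size ps by rewrite /=; lia.
rewrite [dotr N _]/= !run_cons IH; last first.
- move=> q Hq; have [] := Hp q; first by rewrite in_cons Hq orbT.
  lia.
- by rewrite !size_rcons Hs.
rewrite big_cons.
set e1 := rcons env _.
set e2 := rcons e1 _.
have S1 : size e1 = N.+2 by rewrite size_rcons Hs.
have E1 : forall i, i < N.+1 -> nth 0%R e1 i = nth 0%R env i.
  by move=> i Hi; rewrite nth_rcons Hs Hi.
have E2 : forall i, i < N.+2 -> nth 0%R e2 i = nth 0%R e1 i.
  by move=> i Hi; rewrite nth_rcons S1 Hi.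
have -> : nth 0%R e2 N.+2 = (nth 0%R env N + nth 0%R env p.1 * nth 0%R env p.2)%R.
  rewrite nth_rcons S1 ltnn eqxx /= E1 // -/e1.
  by rewrite nth_rcons Hs ltnn eqxx.
rewrite -GRing.addrA; congr (_ + (_ + _))%R.
apply: eq_big_seq => q Hq.
have [Q1 Q2] : q.1 < N /\ q.2 < N by apply: Hp; rewrite in_cons Hq orbT.
rewrite !E2 ?E1 //; lia.
Qed.

Lemma dot_spec (env : seq F) N ps : size env = N ->
  (forall p, p \in ps -> p.1 < N /\ p.2 < N) ->
  nth 0%R (run_instrs env (dot N ps)) (N + 2 * size ps) =
  (\sum_(p <- ps) nth 0%R env p.1 * nth 0%R env p.2)%R.
Proof.
move=> Hs Hp; rewrite /dot run_cons dotr_spec ?size_rcons ?Hs //=.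
rewrite nth_rcons Hs ltnn eqxx GRing.add0r.
apply: eq_big_seq => q Hq; have [Q1 Q2] := Hp q Hq.
by rewrite !nth_rcons Hs Q1 Q2.
Qed.

Lemma size_dot N ps : size (dot N ps) = (2 * size ps).+1.
Proof. by rewrite /= size_dotr. Qed.

Definition stage base m L (bs : nat -> seq (nat * nat)) : seq (instr F) :=
  flatten [seq dot (base + i * (2 * L).+1) (bs i) | i <- iota 0 m].

Lemma size_stage base m L bs : (forall i, size (bs i) = L) ->
  size (stage base m L bs) = m * (2 * L).+1.
Proof.
move=> HL; elim: m => [|m IH]; first by [].
rewrite /stage (_ : iota 0 m.+1 = iota 0 m ++ [:: m]); last by rewrite -addn1 iotaD.
rewrite map_cat flatten_cat size_cat.
move: IH; rewrite /stage => ->.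
rewrite /= cats0 /dot /= size_dotr HL; lia.
Qed.

Lemma stage_spec (env : seq F) base m L bs : size env = base ->
  (forall i, size (bs i) = L) ->
  (forall i p, i < m -> p \in bs i -> p.1 < base /\ p.2 < base) ->
  forall i, i < m ->
  nth 0%R (run_instrs env (stage base m L bs)) (base + i * (2 * L).+1 + 2 * L) =
  (\sum_(p <- bs i) nth 0%R env p.1 * nth 0%R env p.2)%R.
Proof.
move=> Hs HL Hp.
elim: m Hp => [|m IH] Hp i Hi; first by [].
have E : stage base m.+1 L bs = stage base m L bs ++ dot (base + m * (2 * L).+1) (bs m).
  rewrite /stage (_ : iota 0 m.+1 = iota 0 m ++ [:: m]); last by rewrite -addn1 iotaD.
  by rewrite map_cat flatten_cat /= cats0.
have Hsz : size (run_instrs env (stage base m L bs)) = base + m * (2 * L).+1.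
  by rewrite run_size size_stage // Hs.
rewrite E run_cat.
have [Him|Him] : i < m \/ i = m by lia.
- rewrite run_prefix; last by rewrite Hsz; nia.
  apply: IH => // j p Hj; apply: Hp; lia.
- subst i.
  have Hq : forall q, q \in bs m -> q.1 < base /\ q.2 < base by move=> q; apply: Hp.
  have := dot_spec Hsz (ps := bs m) _; rewrite HL => ->; last first.
    by move=> q /Hq [Q1 Q2]; split; apply: leq_trans (leq_addr _ _).
  apply: eq_big_seq => q /Hq [Q1 Q2].
  by rewrite !run_prefix ?Hs.
Qed.

End Gen.

Lemma nth_allpairs (A B : Type) (s : seq A) (t : seq B) m x0 y0 i j :
  size t = m -> i < size s -> j < m ->
  nth (x0, y0) [seq (x, y) | x <- s, y <- t] (i * m + j) = (nth x0 s i, nth y0 t j).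
Proof.
move=> Ht; elim: s i => [|x s IH] [|i] //= Hi Hj.
  by rewrite nth_cat size_map Ht Hj (nth_map y0) ?Ht.
rewrite nth_cat size_map Ht mulSn.
have -> : (m + i * m + j < m) = false by lia.
by rewrite -addnA addKn IH.
Qed.

Lemma enum_prod_ord (T1 T2 : finType) :
  enum {: T1 * T2} = [seq (x1, x2) | x1 <- enum T1, x2 <- enum T2].
Proof. by rewrite [LHS]enumT unlock. Qed.

Section Enc.
Variables (F : fieldType) (n r : nat) (T : tensor3 F n) (V : 'M[F]_(n, r)).

Lemma size_encode : size (encode_input T V) = n * n * n + n * r.
Proof.
by rewrite /encode_input size_cat !size_map -!enumT -!cardT !card_prod !card_ord.
Qed.

Lemma nth_encode_T (i j k : 'I_n) :
  nth 0%R (encode_input T V) ((i * n + j) * n + k) = T i j k.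
Proof.
have Hi := ltn_ord i; have Hj := ltn_ord j; have Hk := ltn_ord k.
rewrite /encode_input nth_cat.
set s1 := map _ _.
have Hs : size s1 = n * n * n.
  rewrite /s1 size_map; move: (cardT ('I_n * 'I_n * 'I_n)%type).
  by rewrite !card_prod !card_ord => H; exact: (esym H).
rewrite Hs.
have -> : (i * n + j) * n + k < n * n * n by nia.
rewrite /s1 (nth_map (i, j, k)); last first.
  rewrite -cardT !card_prod !card_ord; nia.
have E2 : nth (i, j) (enum {: 'I_n * 'I_n}) (i * n + j) = (i, j).
  rewrite enum_prod_ord (nth_allpairs i j) ?size_enum_ord //.
  by rewrite !nth_ord_enum.
have E3 : nth (i, j, k) (enum {: 'I_n * 'I_n * 'I_n}) ((i * n + j) * n + k) = (i, j, k).
  rewrite enum_prod_ord (nth_allpairs (i,j) k) ?size_enum_ord ?E2 ?nth_ord_enum //.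
  move: (cardT ('I_n * 'I_n)%type); rewrite !card_prod !card_ord => H.
  rewrite -H; nia.
by rewrite E3.
Qed.

Lemma nth_encode_V (a : 'I_n) (b : 'I_r) :
  nth 0%R (encode_input T V) (n * n * n + a * r + b) = V a b.
Proof.
have Ha := ltn_ord a; have Hb := ltn_ord b.
rewrite /encode_input nth_cat.
set s1 := map _ _.
have Hs : size s1 = n * n * n.
  rewrite /s1 size_map; move: (cardT ('I_n * 'I_n * 'I_n)%type).
  by rewrite !card_prod !card_ord => H; exact: (esym H).
rewrite Hs.
have -> : (n * n * n + a * r + b < n * n * n) = false by lia.
rewrite -addnA addKn (nth_map (a, b)); last first.
  rewrite -cardT !card_prod !card_ord; nia.
rewrite enum_prod_ord (nth_allpairs a b) ?size_enum_ord //.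
by rewrite !nth_ord_enum.
Qed.
End Enc.

Section Prog.
Variables (F : fieldType) (n r : nat).
Definition N0 := n * n * n + n * r.
Definition posT i j k := (i * n + j) * n + k.
Definition posV a b := n * n * n + a * r + b.
Definition bs1 idx := [seq (posV (idx %/ n) b, posV (idx %% n) b) | b <- iota 0 r].
Definition N1 := N0 + (n * n) * (2 * r).+1.
Definition posW i j := N0 + (i * n + j) * (2 * r).+1 + 2 * r.
Definition pairs := [seq (i, j) | i <- iota 0 n, j <- iota 0 n].
Definition bs2 k := [seq (posW p.1 p.2, posT p.1 p.2 k) | p <- pairs].
Definition N2 := N1 + n * (2 * (n * n)).+1.
Definition posU k := N1 + k * (2 * (n * n)).+1 + 2 * (n * n).
Definition bs3 b := [seq (posV j b, posU j) | j <- iota 0 n].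
Definition prog : slp F :=
  SLP (stage F N0 (n * n) r bs1 ++ stage F N1 n (n * n) bs2 ++ stage F N2 r n bs3)
      [seq N2 + b * (2 * n).+1 + 2 * n | b <- iota 0 r].

Lemma prog_cost : r <= n -> slp_cost prog <= 9 * n ^ 3.
Proof.
move=> Hr; rewrite /slp_cost /= !size_cat !size_stage.
- rewrite /N0; case: n Hr => [|n'] Hr; first by have -> : r = 0 by lia.
  nia.
- by move=> i; rewrite size_map size_iota.
- by move=> i; rewrite size_map size_allpairs size_iota.
- by move=> i; rewrite size_map size_iota.
Qed.
End Prog.


Lemma big_iota_ord (R : Type) (idx : R) (op : Monoid.law idx) m (G : nat -> R) :
  \big[op/idx]_(x <- iota 0 m) G x = \big[op/idx]_(i < m) G i.
Proof. by rewrite -(big_mkord xpredT) /index_iota subn0. Qed.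

Lemma bnd2 n r a b : a < n -> b < n ->
  n * n * n + n * r + (a * n + b) * (2 * r).+1 + 2 * r <
  n * n * n + n * r + n * n * (2 * r).+1.
Proof.
move=> Ha Hb; have H : a * n + b + 1 <= n * n by nia.
have := leq_mul H (leqnn (2 * r).+1); nia.
Qed.
Lemma bnd3 n r a b i : a < n -> b < n -> i < n ->
  (a * n + b) * n + i < n * n * n + n * r + n * n * (2 * r).+1.
Proof. move=> Ha Hb Hi; nia. Qed.

Section Correct.
Variables (F : fieldType) (n r : nat) (T : tensor3 F n) (V : 'M[F]_(n, r)).

Definition e0 := encode_input T V.
Definition e1 := run_instrs e0 (stage F (N0 n r) (n * n) r (bs1 n r)).
Definition e2 := run_instrs e1 (stage F (N1 n r) n (n * n) (bs2 n r)).

Lemma Hs0 : size e0 = N0 n r.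
Proof. by rewrite /e0 size_encode. Qed.

Lemma Hs1 : size e1 = N1 n r.
Proof. by rewrite /e1 run_size size_stage ?size_encode // => i; rewrite size_map size_iota. Qed.

Lemma Hs2 : size e2 = N2 n r.
Proof.
rewrite /e2 run_size size_stage.
- have := Hs1; rewrite /N2; lia.
- by move=> i; rewrite size_map size_allpairs !size_iota.
Qed.

Lemma W_val (i j : 'I_n) :
  nth 0%R e1 (posW n r i j) = (\sum_(b < r) V i b * V j b)%R.
Proof.
have Hi := ltn_ord i; have Hj := ltn_ord j.
have Hn : 0 < n by lia.
rewrite /posW /e1 (stage_spec (F:=F) (env:=e0) (L:=r) (m:=n*n)) //.
- rewrite /bs1 big_map divnMDl // modnMDl divn_small // modn_small // addn0.
  rewrite big_iota_ord; apply: eq_bigr => b _.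
  by rewrite /posV !nth_encode_V.
- exact: size_encode.
- by move=> k; rewrite size_map size_iota.
- move=> k p Hk /mapP [b]; rewrite mem_iota => /andP [_ Hb] ->.
  have Hq : k %/ n < n by rewrite ltn_divLR.
  have Hm : k %% n < n by rewrite ltn_pmod.
  rewrite /posV /N0 /=; split; nia.
- nia.
Qed.

Lemma e1_T (i j k : 'I_n) : nth 0%R e1 (posT n i j k) = T i j k.
Proof.
have Hi := ltn_ord i; have Hj := ltn_ord j; have Hk := ltn_ord k.
rewrite /e1 run_prefix; first by rewrite /posT /e0 nth_encode_T.
rewrite size_encode /posT; nia.
Qed.

Lemma U_val (k : 'I_n) :
  nth 0%R e2 (posU n r k) =
  (\sum_(i < n) \sum_(j < n) (\sum_(b < r) V i b * V j b) * T i j k)%R.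
Proof.
have Hk := ltn_ord k.
rewrite /posU /e2 (stage_spec (F:=F) (env:=e1) (L:=n*n) (m:=n)) //.
- rewrite /bs2 big_map /pairs big_allpairs big_iota_ord; apply: eq_bigr => i _.
  rewrite big_iota_ord; apply: eq_bigr => j _ /=.
  by rewrite W_val e1_T.
- exact: Hs1.
- by move=> i; rewrite size_map size_allpairs !size_iota.
- move=> i p Hi /mapP [q /allpairsP [[a b] [/= Ha Hb ->]] ->] /=.
  move: Ha Hb; rewrite !mem_iota /=.
  move=> Ha Hb.
  rewrite add0n in Ha Hb.
  rewrite /posW /posT /N1 /N0; split; [exact: bnd2 | exact: bnd3].
Qed.

Lemma out_val (b : 'I_r) :
  nth 0%R (run_instrs e2 (stage F (N2 n r) r n (bs3 n r)))
    (N2 n r + b * (2 * n).+1 + 2 * n) =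
  (\sum_(j < n) V j b * nth 0%R e2 (posU n r j))%R.
Proof.
have Hb := ltn_ord b.
rewrite (stage_spec (F:=F) (env:=e2) (L:=n) (m:=r)) //.
- rewrite /bs3 big_map big_iota_ord; apply: eq_bigr => j _ /=.
  have Hj := ltn_ord j.
  rewrite /e2 run_prefix; last first.
    rewrite Hs1 /posV /N1 /N0; nia.
  rewrite /e1 run_prefix; last by rewrite size_encode /posV /N0; nia.
  by rewrite /posV /e0 nth_encode_V.
- exact: Hs2.
- by move=> i; rewrite size_map size_iota.
- move=> i p Hi /mapP [j]; rewrite mem_iota => /andP [_ Hj] ->.
  rewrite /posV /posU /N2 /N1 /N0 /=; split; nia.
Qed.

Lemma prog_correct :
  slp_eval (prog F n r) (encode_input T V) =
  [seq (\tr (slice (tensor_act V T) k))%R | k <- enum 'I_r].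
Proof.
rewrite /slp_eval /prog /= !run_cat -/e0 -/e1 -/e2.
rewrite -map_comp -val_enum_ord -map_comp; apply: eq_map => b /=.
rewrite out_val /mxtrace.
under eq_bigr => j _ do rewrite U_val.
rewrite /tensor_act.
under [RHS]eq_bigr => c _ do rewrite mxE.
symmetry.
rewrite exchange_big /=.
under eq_bigr => j1 _ do rewrite exchange_big /=.
under eq_bigr => j1 _ do under eq_bigr => j2 _ do rewrite exchange_big /=.
under eq_bigr => j1 _ do rewrite exchange_big /=.
rewrite exchange_big /=.
apply: eq_bigr => j3 _; rewrite big_distrr; apply: eq_bigr => j1 _.
rewrite big_distrr; apply: eq_bigr => j2 _.
rewrite big_distrl big_distrr; apply: eq_bigr => c _ /=.
ring.
Qed.
End Correct.

Local Open Scope ring_scope.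

Theorem theorem3p3 :
  exists (c : nat) (Alg : nat -> nat -> slp C),
    forall n r : nat, (r <= n)%N ->
      (slp_cost (Alg n r) <= c * n ^ 3)%N /\
      forall (T : tensor3 C n) (V : 'M[C]_(n, r)),
        symmetric_tensor T ->
        slp_eval (Alg n r) (encode_input T V)
        = [seq \tr (slice (tensor_act V T) k) | k <- enum 'I_r].
Proof.
exists 9%N, (fun n r => prog C n r) => n r Hr; split; first exact: prog_cost.
by move=> T V _; exact: prog_correct.
Qed.
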